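(* Let $\mathcal{F}$ be a $k$-uniform linear family and let $\nu=\nu(\mathcal{F})$. If $x$ is a vertex of $\mathcal{F}$ with $|\mathcal{F}_x|>k\nu$, then $x\in S_{\mathcal{F}}$.
   Context: A family is a finite collection of distinct subsets of a vertex set; it is $k$-uniform if every member has exactly $k$ elements and linear if any two distinct members share at most one vertex. A matching is a collection of pairwise disjoint members; $\nu(\mathcal{F})$ is the maximum size of a matching, and a maximum matching is one of that size. $\mathcal{F}_x=\{A\in\mathcal{F}:x\in A\}$. $S_{\mathcal{F}}$ denotes the set of vertices of $X_{\mathcal{F}}=\bigcup_{A\in\mathcal{F}}A$ that are covered by (i.e., belong to a member of) every maximum matching of $\mathcal{F}$. *)

(* Defs.v *)
From mathcomp Require Import all_boot.
Set Implicit Arguments. Unset Strict Implicit. Unset Printing Implicit Defensive.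

Section Families.
Variable T : finType.
Implicit Types (F M : {set {set T}}) (x : T) (k : nat).

Definition uniform k F : bool := [forall A in F, #|A| == k].

Definition linear_family F : bool :=
  [forall A in F, forall B in F, (A != B) ==> (#|A :&: B| <= 1)].

Definition is_matching F M : bool :=
  (M \subset F) && [forall A in M, forall B in M, (A != B) ==> [disjoint A & B]].

Definition nu F : nat := \max_(M : {set {set T}} | is_matching F M) #|M|.

Definition is_max_matching F M : bool := is_matching F M && (#|M| == nu F).

Definition star F x : {set {set T}} := [set A in F | x \in A].

Definition S_fam F : {set T} :=
  [set x in cover F | [forall M : {set {set T}}, is_max_matching F M ==> (x \in cover M)]].

End Families.

(* Main.v *)
Require Import Defs.
From mathcomp Require Import all_boot.

Theorem proposition1 (T : finType) (k : nat) (F : {set {set T}}) (x : T) :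
  uniform k F -> linear_family F -> x \in cover F ->
  #|star F x| > k * nu F ->
  x \in S_fam F.
Proof.
move=> /forallP unif /forallP lin xF big.
rewrite inE xF /=; apply/forallP => M; apply/implyP => /andP [mM /eqP szM].
apply/negPn/negP => /negP xM.
have /andP [MF /forallP dM] := mM.
have claim : forall A, A \in star F x -> A :&: cover M != set0.
  move=> A; rewrite inE => /andP [AF xA]; apply/negP => /eqP A0.
  have AM : A \notin M.
    apply/negP => AM; apply: xM; apply/bigcupP; exists A => //.
  have dis : forall B, B \in M -> [disjoint A & B].
    move=> B BM; rewrite -setI_eq0; apply/eqP/setP => y; rewrite !inE.
    apply/negP => /andP [yA yB].
    have : y \in A :&: cover M by rewrite inE yA; apply/bigcupP; exists B.
    by rewrite A0 inE.
  have mM' : is_matching F (A |: M).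
    apply/andP; split.
      by apply/subsetP => B /setU1P [->|/(subsetP MF)].
    apply/forallP => B; apply/implyP => /setU1P BM; apply/forallP => C;
      apply/implyP => /setU1P CM.
    case: BM => [->|BM]; case: CM => [->|CM]; apply/implyP => neq.
    - by move: neq; rewrite eqxx.
    - exact: dis.
    - by rewrite disjoint_sym; apply: dis.
    - by move: (dM B) => /implyP /(_ BM) /forallP /(_ C) /implyP /(_ CM) /implyP /(_ neq).
  have := @leq_bigmax_cond _ (is_matching F) (fun M0 => #|M0|) _ mM'.
  by rewrite -/(nu F) cardsU1 AM -szM ltnn.
pose f (A : {set T}) := odflt x [pick y in A :&: cover M].
have fP : forall A, A \in star F x -> f A \in A :&: cover M.
  move=> A /claim; rewrite /f; case: pickP => //= H; case/set0Pn => y.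
  by rewrite H.
have inj : {in star F x &, injective f}.
  move=> A B HA HB e; apply/eqP; apply/negP => /negP neq.
  move: (fP A HA) (fP B HB); rewrite !inE -e => /andP [yA yM] /andP [yB _].
  have xA : x \in A by move: HA; rewrite inE => /andP [].
  have xB : x \in B by move: HB; rewrite inE => /andP [].
  have AF : A \in F by move: HA; rewrite inE => /andP [].
  have BF : B \in F by move: HB; rewrite inE => /andP [].
  have neqxy : f A != x by apply/eqP => ex; apply: xM; rewrite -ex.
  have : 2 <= #|A :&: B|.
    have -> : 2 = #|[set x; f A]| by rewrite cards2 eq_sym neqxy.
    apply: subset_leq_card; apply/subsetP => z; rewrite !inE.
    by case/orP => /eqP ->; rewrite ?xA ?xB ?yA ?yB.
  move: (lin A) => /implyP /(_ AF) /forallP /(_ B) /implyP /(_ BF) /implyP /(_ neq).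
  by case: #|_| => [|[|]].
have Hsub : f @: star F x \subset cover M.
  by apply/subsetP => y /imsetP [A HA ->]; move: (fP A HA); rewrite inE => /andP [].
have := subset_leq_card Hsub; rewrite card_in_imset //.
have Hc := leq_card_cover M.
have Hs : \sum_(A in M) #|A| = k * #|M|.
  rewrite (eq_bigr (fun _ => k)); last first.
    by move=> A AM; apply/eqP; move: (unif A) => /implyP; apply; apply: (subsetP MF).
  by rewrite sum_nat_const mulnC.
move=> H; move: big; rewrite -szM -Hs => big.
have := leq_trans big (leq_trans H Hc.1).
by rewrite ltnn.
Qed.
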